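(* Let $G_1$ and $G_2$ be connected reductive algebraic groups over an algebraically closed field $\mathbb{K}$ of characteristic zero, and let $G=G_1\times G_2$. Then $M(G)=M(G_1)\cap M(G_2)$.
   Context: For a connected affine algebraic group $G$ over $\mathbb{K}$, define $M(G)=\{n\in\mathbb{N}=\{1,2,\dots\} : (V^{\otimes n})^G\neq\{0\}\text{ for every nonzero finite-dimensional rational }G\text{-module }V\}$. *)

(* Defs.v *)
(* linear algebraic groups realised as Zariski-closed
   subgroups of GL_n(K), with rational representations given by regular
   matrix coefficients. *)
From HB Require Import structures.
From mathcomp Require Import all_boot all_order all_algebra.
From mathcomp Require Import mpoly.
Set Implicit Arguments. Unset Strict Implicit. Unset Printing Implicit Defensive.
Import Order.TTheory GRing.Theory Num.Theory.
Local Open Scope ring_scope.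

Section LinearAlgebraicGroups.
Variable K : fieldType.

Definition coords n (A : 'M[K]_n) : 'I_(n * n) -> K := fun i => mxvec A 0 i.

Definition peval n (p : {mpoly K[n * n]}) (A : 'M[K]_n) : K := p.@[coords A].

Definition zariski_closed n (G : 'M[K]_n -> Prop) : Prop :=
  exists s : seq {mpoly K[n * n]},
    forall A, G A <-> (A \in unitmx /\ forall p, p \in s -> peval p A = 0).

Definition subgroup_GL n (G : 'M[K]_n -> Prop) : Prop :=
  [/\ forall A, G A -> A \in unitmx,
      G 1%:M,
      forall A B, G A -> G B -> G (A *m B)
    & forall A, G A -> G (invmx A)].

Definition algebraic_group n (G : 'M[K]_n -> Prop) : Prop :=
  subgroup_GL G /\ zariski_closed G.

(* irreducible (= connected for algebraic groups): the vanishing ideal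
   of G in K[x_ij] is prime (G is nonempty) *)
Definition irreducible_set n (G : 'M[K]_n -> Prop) : Prop :=
  (exists A, G A) /\
  forall p q : {mpoly K[n * n]},
    (forall A, G A -> peval (p * q) A = 0) ->
    (forall A, G A -> peval p A = 0) \/ (forall A, G A -> peval q A = 0).

Definition connected_group n (G : 'M[K]_n -> Prop) : Prop :=
  algebraic_group G /\ irreducible_set G.

Definition unipotent_mx n (A : 'M[K]_n) : Prop :=
  exists k : nat, (A - 1%:M) ^+ k = 0.

(* reductive: the unipotent radical (largest closed connected normal
   unipotent subgroup) is trivial, i.e. every closed connected normal
   unipotent subgroup of G is trivial *)
Definition reductive_group n (G : 'M[K]_n -> Prop) : Prop :=
  algebraic_group G /\
  forall H : 'M[K]_n -> Prop,
    connected_group H ->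
    (forall A, H A -> G A) ->
    (forall A B, G A -> H B -> H (invmx A *m B *m A)) ->
    (forall A, H A -> unipotent_mx A) ->
    forall A, H A -> A = 1%:M.

(* regular function on G: restriction of an element of
   K[GL_n] = K[x_ij, 1/det] *)
Definition regular_on n (G : 'M[K]_n -> Prop) (f : 'M[K]_n -> K) : Prop :=
  exists (p : {mpoly K[n * n]}) (k : nat),
    forall A, G A -> f A = peval p A / (\det A) ^+ k.

Definition rational_rep n (G : 'M[K]_n -> Prop) m
    (rho : 'M[K]_n -> 'M[K]_m) : Prop :=
  [/\ forall i j, regular_on G (fun A => rho A i j),
      forall A, G A -> rho A \in unitmx,
      rho 1%:M = 1%:M
    & forall A B, G A -> G B -> rho (A *m B) = rho A *m rho B].

(* V^{(x) k} for V = K^m in coordinates: tensors indexed by k-tuples of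
   basis indices, with the diagonal action of g *)
Definition tensor_act m k (g : 'M[K]_m) (T : {ffun {ffun 'I_k -> 'I_m} -> K})
  : {ffun {ffun 'I_k -> 'I_m} -> K} :=
  [ffun i : {ffun 'I_k -> 'I_m} => \sum_(j : {ffun 'I_k -> 'I_m})
                (\prod_(t < k) g (i t) (j t)) * T j].

Definition has_nonzero_invariant n (G : 'M[K]_n -> Prop) m
    (rho : 'M[K]_n -> 'M[K]_m) (k : nat) : Prop :=
  exists T : {ffun {ffun 'I_k -> 'I_m} -> K},
    T != 0 /\ forall A, G A -> tensor_act (rho A) T = T.

Definition inM n (G : 'M[K]_n -> Prop) (k : nat) : Prop :=
  (0 < k)%N /\
  forall (m : nat) (rho : 'M[K]_n -> 'M[K]_m),
    (0 < m)%N -> rational_rep G rho -> has_nonzero_invariant G rho k.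

Definition prod_group n1 n2 (G1 : 'M[K]_n1 -> Prop) (G2 : 'M[K]_n2 -> Prop)
  : 'M[K]_(n1 + n2) -> Prop :=
  fun C => exists A B, [/\ G1 A, G2 B & C = block_mx A 0 0 B].

End LinearAlgebraicGroups.

(* Main.v *)
Require Import Defs.
From HB Require Import structures.
From mathcomp Require Import all_boot all_order all_algebra.
From mathcomp Require Import mpoly.
From mathcomp Require Import ring.
From Stdlib Require Import ClassicalEpsilon.
Set Implicit Arguments. Unset Strict Implicit. Unset Printing Implicit Defensive.
Import Order.TTheory GRing.Theory Num.Theory.
Local Open Scope ring_scope.

Section Reg.
Variable K : fieldType.

Definition Xmat n : 'M[{mpoly K[n * n]}]_n := \matrix_(r, c) 'X_(mxvec_index r c).

Lemma map_Xmat n (A : 'M[K]_n) : map_mx (meval (coords A)) (Xmat n) = A.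
Proof.
by apply/matrixP => i j; rewrite !mxE mevalXU /coords mxvecE.
Qed.

Lemma peval_map N n (M : 'M[{mpoly K[N * N]}]_n) (p : {mpoly K[n * n]}) :
  exists q : {mpoly K[N * N]}, forall A : 'M[K]_N,
    peval p (map_mx (meval (coords A)) M) = peval q A.
Proof.
exists (p \mPo [tuple mxvec M 0 i | i < n * n]) => A.
rewrite /peval comp_mpoly_meval; apply: meval_eq => i.
by rewrite tnth_mktuple /coords -map_mxvec mxE.
Qed.

Definition Pdet n : {mpoly K[n * n]} := \det (Xmat n).

Lemma peval_Pdet n (A : 'M[K]_n) : peval (Pdet n) A = \det A.
Proof. by rewrite /peval /Pdet -det_map_mx map_Xmat. Qed.


Section Closure.
Variables (n : nat) (G : 'M[K]_n -> Prop).
Hypothesis hGu : forall A, G A -> A \in unitmx.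

Lemma detG_neq0 A : G A -> \det A != 0.
Proof. by move=> /hGu; rewrite unitmxE unitfE. Qed.

Lemma reg_const c : regular_on G (fun _ => c).
Proof. by exists c%:MP, 0%N => A _; rewrite /peval mevalC expr0 divr1. Qed.

Lemma reg_entry i j : regular_on G (fun A => A i j).
Proof.
by exists 'X_(mxvec_index i j), 0%N => A _; rewrite /peval mevalXU expr0 divr1 /coords mxvecE.
Qed.

Lemma reg_add f g : regular_on G f -> regular_on G g -> regular_on G (fun A => f A + g A).
Proof.
move=> [p [k hp]] [q [l hq]].
exists (p * Pdet n ^+ l + q * Pdet n ^+ k), (k + l)%N => A GA.
rewrite hp // hq // /peval mevalD !mevalM !rmorphXn /= -!/(peval _ _) peval_Pdet.
have := detG_neq0 GA; set d := \det A => d0.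
rewrite exprD; field.
by rewrite !expf_neq0.
Qed.

Lemma reg_mul f g : regular_on G f -> regular_on G g -> regular_on G (fun A => f A * g A).
Proof.
move=> [p [k hp]] [q [l hq]].
exists (p * q), (k + l)%N => A GA.
rewrite hp // hq // /peval mevalM -!/(peval _ _).
have := detG_neq0 GA; set d := \det A => d0.
rewrite exprD; field.
by rewrite !expf_neq0.
Qed.

Lemma reg_ext f g : (forall A, G A -> f A = g A) -> regular_on G f -> regular_on G g.
Proof. by move=> e [p [k hp]]; exists p, k => A GA; rewrite -e // hp. Qed.

Lemma reg_sum (I : finType) (F : I -> 'M[K]_n -> K) :
  (forall i, regular_on G (F i)) -> regular_on G (fun A => \sum_i F i A).
Proof.
move=> hF; rewrite /=.
elim: (index_enum I) => [|i s IH].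
  by apply: reg_ext (reg_const 0) => A _; rewrite big_nil.
by apply: reg_ext (reg_add (hF i) IH) => A _; rewrite big_cons.
Qed.

End Closure.

Lemma reg_pull N n (G' : 'M[K]_N -> Prop) (G : 'M[K]_n -> Prop)
  (M : 'M[{mpoly K[N * N]}]_n) (r : {mpoly K[N * N]}) f :
  (forall A, G' A -> A \in unitmx) ->
  (forall A, G' A -> G (map_mx (meval (coords A)) M)) ->
  (forall A, G' A -> \det A = \det (map_mx (meval (coords A)) M) * peval r A) ->
  regular_on G f -> regular_on G' (fun A => f (map_mx (meval (coords A)) M)).
Proof.
move=> hu hG hdet [p [k hp]].
have [q hq] := peval_map M p.
exists (q * r ^+ k), k => A GA.
rewrite hp; last exact: hG.
rewrite hq /peval mevalM rmorphXn /= -!/(peval _ _).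
have := detG_neq0 hu GA; rewrite hdet // mulf_eq0 negb_or => /andP[d0 r0].
rewrite exprMn; field.
by rewrite !expf_neq0.
Qed.

Definition regmx n (G : 'M[K]_n -> Prop) m1 m2 (F : 'M[K]_n -> 'M[K]_(m1, m2)) :=
  forall i j, regular_on G (fun A => F A i j).

Section RegMx.
Variables (n : nat) (G : 'M[K]_n -> Prop).
Hypothesis hGu : forall A, G A -> A \in unitmx.

Lemma regmx_const m1 m2 (C : 'M[K]_(m1, m2)) : regmx G (fun _ => C).
Proof. by move=> i j; apply: reg_const. Qed.

Lemma regmx_add m1 m2 (F H : 'M[K]_n -> 'M[K]_(m1, m2)) :
  regmx G F -> regmx G H -> regmx G (fun A => F A + H A).
Proof.
move=> hF hH i j; apply: reg_ext (reg_add hGu (hF i j) (hH i j)) => A _.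
by rewrite mxE.
Qed.

Lemma regmx_mul m1 m2 m3 (F : 'M[K]_n -> 'M[K]_(m1, m2)) (H : 'M[K]_n -> 'M[K]_(m2, m3)) :
  regmx G F -> regmx G H -> regmx G (fun A => F A *m H A).
Proof.
move=> hF hH i j.
apply: reg_ext (reg_sum hGu (fun l => reg_mul hGu (hF i l) (hH l j))) => A _.
by rewrite mxE.
Qed.

Lemma regmx_tr m1 m2 (F : 'M[K]_n -> 'M[K]_(m1, m2)) :
  regmx G F -> regmx G (fun A => (F A)^T).
Proof. by move=> hF i j; apply: reg_ext (hF j i) => A _; rewrite mxE. Qed.

End RegMx.
End Reg.

Section Tensor.
Variable K : fieldType.
Variable k : nat.

Definition tact (I J : finType) (M : I -> J -> K) (T : {ffun {ffun 'I_k -> J} -> K}) :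
  {ffun {ffun 'I_k -> I} -> K} :=
  [ffun i : {ffun 'I_k -> I} => \sum_(j : {ffun 'I_k -> J}) (\prod_(t < k) M (i t) (j t)) * T j].

Lemma tensor_actE m (g : 'M[K]_m) T : tensor_act g T = tact (fun i j => g i j) T.
Proof. by []. Qed.

Lemma tact_ext (I J : finType) (M M' : I -> J -> K) T :
  (forall i j, M i j = M' i j) -> tact M T = tact M' T.
Proof.
move=> e; apply/ffunP => i; rewrite !ffunE; apply: eq_bigr => j _.
by congr (_ * _); apply: eq_bigr => t _; rewrite e.
Qed.

Lemma tact_comp (I J L : finType) (M : I -> J -> K) (N : J -> L -> K) T :
  tact M (tact N T) = tact (fun i l => \sum_j M i j * N j l) T.
Proof.
apply/ffunP => i; rewrite !ffunE.
under eq_bigr => j _ do rewrite ffunE big_distrr /=.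
rewrite exchange_big /=; apply: eq_bigr => l _.
rewrite (bigA_distr_bigA (fun t j => M (i t) j * N j (l t))) /= big_distrl /=.
by apply: eq_bigr => j _; rewrite mulrA big_split.
Qed.

Lemma tact_lin (I J : finType) (M : I -> J -> K) T :
  T = 0 -> tact M T = 0.
Proof.
by move=> ->; apply/ffunP => i; rewrite !ffunE big1 // => j _; rewrite ffunE mulr0.
Qed.

Lemma tact_delta (I : finType) T :
  tact (fun i j : I => (i == j)%:R) T = T.
Proof.
apply/ffunP => i; rewrite ffunE (bigD1 i) //=.
rewrite [X in X * _]big1 ?mul1r; last by move=> t _; rewrite eqxx.
rewrite big1 ?addr0 //.
move=> j /negPf ji.
have [t ht] : exists t, i t != j t.
  apply/existsP; apply: contraFT ji; rewrite negb_exists => /forallP h.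
  by apply/eqP/ffunP => t; have := h t; rewrite negbK => /eqP.
by rewrite (bigD1 t) //= (negPf ht) mul0r mul0r.
Qed.

Lemma tact_inj (I J : finType) (M : I -> J -> K) (L : J -> I -> K) T :
  (forall j j', \sum_i L j i * M i j' = (j == j')%:R) ->
  tact M T = 0 -> T = 0.
Proof.
move=> hL hT; rewrite -(tact_delta T).
rewrite (@tact_ext _ _ _ (fun j j' => \sum_i L j i * M i j')); last by move=> *; rewrite hL.
by rewrite -tact_comp hT; apply: tact_lin.
Qed.


Definition tpair (I1 I2 : finType) (T1 : {ffun {ffun 'I_k -> I1} -> K})
  (T2 : {ffun {ffun 'I_k -> I2} -> K}) : {ffun {ffun 'I_k -> I1 * I2} -> K} :=
  [ffun f : {ffun 'I_k -> I1 * I2} =>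
     T1 [ffun t => (f t).1] * T2 [ffun t => (f t).2]].

Lemma tact_pair (I1 I2 J1 J2 : finType) (M1 : I1 -> J1 -> K) (M2 : I2 -> J2 -> K) T1 T2 :
  tact (fun (i : I1 * I2) (j : J1 * J2) => M1 i.1 j.1 * M2 i.2 j.2) (tpair T1 T2) =
  tpair (tact M1 T1) (tact M2 T2).
Proof.
apply/ffunP => f; rewrite !ffunE big_distrlr pair_bigA /=.
pose h (p : {ffun 'I_k -> J1} * {ffun 'I_k -> J2}) : {ffun 'I_k -> J1 * J2} :=
  [ffun t => (p.1 t, p.2 t)].
pose h' (g : {ffun 'I_k -> J1 * J2}) := ([ffun t => (g t).1], [ffun t => (g t).2]).
rewrite (reindex h) /=; last first.
  exists h' => [[a b] _|g _]; rewrite /h /h' /=.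
    by congr pair; apply/ffunP => t; rewrite !ffunE.
  by apply/ffunP => t; rewrite !ffunE; case: (g t).
apply: eq_bigr => [[a b]] _ /=; rewrite ffunE.
have -> : [ffun t => (h (a, b) t).1] = a by apply/ffunP => t; rewrite !ffunE.
have -> : [ffun t => (h (a, b) t).2] = b by apply/ffunP => t; rewrite !ffunE.
rewrite big_split /=.
have e1 : \prod_(t < k) M1 (f t).1 (h (a, b) t).1 = \prod_(t < k) M1 ([ffun t0 => (f t0).1] t) (a t).
  by apply: eq_bigr => t _; rewrite !ffunE.
have e2 : \prod_(t < k) M2 (f t).2 (h (a, b) t).2 = \prod_(t < k) M2 ([ffun t0 => (f t0).2] t) (b t).
  by apply: eq_bigr => t _; rewrite !ffunE.
rewrite e1 e2; ring.
Qed.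

Lemma ffun_neq0 (J : finType) (T : {ffun J -> K}) : T != 0 -> exists j, T j != 0.
Proof.
move=> h; apply/existsP; apply: contraNT h; rewrite negb_exists => /forallP H.
by apply/eqP/ffunP => j; have := H j; rewrite negbK ffunE => /eqP.
Qed.

Lemma tpair_neq0 (I1 I2 : finType) T1 T2 :
  T1 != 0 -> T2 != 0 -> @tpair I1 I2 T1 T2 != 0.
Proof.
move=> /ffun_neq0 [a ha] /ffun_neq0 [b hb].
apply/eqP => /ffunP /(_ [ffun t => (a t, b t)]); rewrite !ffunE.
have -> : [ffun t => ([ffun t0 => (a t0, b t0)] t).1] = a by apply/ffunP => t; rewrite !ffunE.
have -> : [ffun t => ([ffun t0 => (a t0, b t0)] t).2] = b by apply/ffunP => t; rewrite !ffunE.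
by move/eqP; rewrite mulf_eq0 (negPf ha) (negPf hb).
Qed.


Lemma left_inv (m : nat) (J : finType) (N : 'I_m -> J -> K) :
  (forall x : J -> K, (forall i, \sum_j N i j * x j = 0) -> forall j, x j = 0) ->
  exists L : J -> 'I_m -> K, forall j j', \sum_i L j i * N i j' = (j == j')%:R.
Proof.
move=> hN.
pose A : 'M[K]_(#|J|, m) := \matrix_(a, i) N i (enum_val a).
have hsum (v : 'rV[K]_#|J|) i :
    (v *m A) 0 i = \sum_j N i j * v 0 (enum_rank j).
  rewrite mxE (reindex (@enum_rank J)) /=; last first.
    by exists enum_val => a _; rewrite ?enum_rankK ?enum_valK.
  by apply: eq_bigr => j _; rewrite mxE enum_rankK mulrC.
have fA : row_free A.
  rewrite -kermx_eq0; apply/eqP/row_matrixP => r; rewrite row0.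
  have : (row r (kermx A) <= kermx A)%MS by apply: row_sub.
  move/sub_kermxP => h0; apply/rowP => a.
  set v := row r (kermx A).
  have H := hN (fun j => v 0 (enum_rank j)).
  have P : forall i, \sum_j N i j * v 0 (enum_rank j) = 0.
    by move=> i; rewrite -hsum h0 mxE.
  have := H P (enum_val a); rewrite enum_valK => ->; by rewrite mxE.
have [B hB] := row_freeP fA.
exists (fun j i => B i (enum_rank j)) => j j'.
move/matrixP: hB => /(_ (enum_rank j') (enum_rank j)).
rewrite !mxE /= => e.
rewrite (inj_eq enum_rank_inj) eq_sym in e; rewrite -e.
by apply: eq_bigr => i _; rewrite mxE enum_rankK mulrC.
Qed.

End Tensor.

Definition pb (P : Prop) : bool := if excluded_middle_informative P then true else false.
Lemma pbP (P : Prop) : reflect P (pb P).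
Proof. by rewrite /pb; case: excluded_middle_informative => h; constructor. Qed.

Section LinAlg.
Variable K : fieldType.

Definition lin_closed N (Q : 'rV[K]_N -> Prop) :=
  Q 0 /\ forall a u v, Q u -> Q v -> Q (a *: u + v).

Lemma lin_comb N (Q : 'rV[K]_N -> Prop) r (B : 'M[K]_(r, N)) (x : 'rV_r) :
  lin_closed Q -> (forall i, Q (row i B)) -> Q (x *m B).
Proof.
move=> [Q0 QD] hB; rewrite mulmx_sum_row.
elim: (index_enum _) => [|i s IH]; first by rewrite big_nil.
by rewrite big_cons; apply: QD.
Qed.

Lemma basis_exists N (Q : 'rV[K]_N -> Prop) : lin_closed Q ->
  exists r (B : 'M[K]_(r, N)), [/\ row_free B, forall i, Q (row i B)
     & forall v, Q v -> exists x : 'rV_r, v = x *m B].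
Proof.
move=> hQ.
pose P r := exists B : 'M[K]_(r, N), row_free B /\ forall i, Q (row i B).
have ex : exists r, pb (P r).
  exists 0%N; apply/pbP; exists 0; split; last by move=> [].
  by rewrite /row_free mxrank0.
have bnd : forall r, pb (P r) -> (r <= N)%N.
  move=> r /pbP [B [fB _]]; move/eqP: fB => <-; exact: rank_leq_col.
have := ex_maxnP ex bnd; case=> r /pbP [B [fB QB]] maxr.
exists r, B; split => // v Qv.
have [/submxP [x ->]|nvB] := boolP (v <= B)%MS; first by exists x.
have : (r.+1 <= r)%N.
  apply: (maxr r.+1); apply/pbP.
  exists (col_mx v B : 'M_(1 + r, N)); split.
    rewrite /row_free; apply/eqP/anti_leq; rewrite rank_leq_row /=.
    have sB : (B <= col_mx v B)%MS by rewrite -addsmxE addsmxSr.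
    have := mxrank_leqif_sup sB; rewrite col_mx_sub submx_refl andbT (negPf nvB).
    by move=> [le ne]; move/eqP: fB => fB; rewrite -{1}fB ltn_neqAle ne le.
  move=> i; have [j|j] := split_ordP (i : 'I_(1 + r)) => ei.
    have -> : row i (col_mx v B : 'M_(1 + r, N)) = row (lshift r j) (col_mx v B) by rewrite -ei.
    rewrite rowKu (ord1 j).
    by have -> : row 0 v = v by apply/rowP => a; rewrite mxE.
  have -> : row i (col_mx v B : 'M_(1 + r, N)) = row (rshift 1 j) (col_mx v B) by rewrite -ei.
  by rewrite rowKd.
by rewrite ltnn.
Qed.

End LinAlg.

Lemma char_poly_tr (F : fieldType) n (A : 'M[F]_n) : char_poly A^T = char_poly A.
Proof.
rewrite /char_poly -det_tr; congr (\det _).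
rewrite /char_poly_mx linearB /= tr_scalar_mx; congr (_ - _).
by apply/matrixP => i j; rewrite !mxE.
Qed.

Section Invariant.
Variables (K : closedFieldType) (m : nat) (Gam : Type) (inG : Gam -> Prop)
  (R : Gam -> 'M[K]_m).

Definition inv_sub d (P : 'M[K]_(m, d)) :=
  forall g, inG g -> exists X : 'M_d, R g *m P = P *m X.

Lemma min_inv_exists : (0 < m)%N -> exists d (P : 'M[K]_(m, d)),
  [/\ (0 < d)%N, \rank P = d, inv_sub P &
      forall d' (P' : 'M[K]_(m, d')), (0 < d')%N -> \rank P' = d' -> inv_sub P' ->
      (d <= d')%N].
Proof.
move=> m0.
pose Pm d := exists P : 'M[K]_(m, d), [/\ (0 < d)%N, \rank P = d & inv_sub P].
have ex : exists d, pb (Pm d).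
  exists m; apply/pbP; exists 1%:M; split => //; first exact: mxrank1.
  by move=> g _; exists (R g); rewrite mulmx1 mul1mx.
case: (ex_minnP ex) => d /pbP [P [d0 rP iP]] mind.
exists d, P; split => // d' P' d'0 rP' iP'.
by apply: mind; apply/pbP; exists P'.
Qed.

Variables (d : nat) (P : 'M[K]_(m, d)).
Hypotheses (d0 : (0 < d)%N) (rP : \rank P = d) (iP : inv_sub P)
  (minP : forall d' (P' : 'M[K]_(m, d')), (0 < d')%N -> \rank P' = d' -> inv_sub P' ->
      (d <= d')%N).

Lemma P_left_inv : exists L : 'M[K]_(d, m), L *m P = 1%:M.
Proof. by apply/row_fullP; rewrite /row_full rP. Qed.

Variable L : 'M[K]_(d, m).
Hypothesis hL : L *m P = 1%:M.

Fact sig_key : unit. Proof. by []. Qed.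
Definition sig g := locked_with sig_key (L *m R g *m P).
Lemma sigE g : sig g = L *m R g *m P. Proof. by rewrite /sig unlock. Qed.

Lemma RP g : inG g -> R g *m P = P *m sig g.
Proof.
move=> Gg; have [X hX] := iP Gg.
by rewrite sigE -mulmxA hX; congr (_ *m _); rewrite mulmxA hL mul1mx.
Qed.

Definition clin_closed (Q : 'cV[K]_d -> Prop) :=
  Q 0 /\ forall a u v, Q u -> Q v -> Q (a *: u + v).

Lemma irred (Q : 'cV[K]_d -> Prop) u0 :
  clin_closed Q -> (forall g u, inG g -> Q u -> Q (sig g *m u)) ->
  Q u0 -> u0 != 0 -> forall u, Q u.
Proof.
move=> [Q0 QD] Qinv Qu0 u0n.
pose Qr (w : 'rV[K]_d) := Q w^T.
have lQr : lin_closed Qr.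
  split; first by rewrite /Qr trmx0.
  by move=> a u v; rewrite /Qr linearD linearZ /=; apply: QD.
have [r [B [fB QB spB]]] := basis_exists lQr.
pose C := B^T.
have rC : \rank (P *m C) = r.
  rewrite -mxrank_tr trmx_mul trmxK mxrankMfree; first by move/eqP: fB.
  by rewrite /row_free mxrank_tr rP.
have r0 : (0 < r)%N.
  case: r B fB QB spB C rC => // B _ _ spB _ _.
  have [x ex] : exists x, u0^T = x *m B by apply: spB; rewrite /Qr trmxK.
  by move: u0n; rewrite -trmx_eq0 ex (thinmx0 x) mul0mx eqxx.
have iPC : inv_sub (P *m C).
  move=> g Gg.
  have hy : forall j : 'I_r, exists y : 'rV_r, (sig g *m col j C)^T = y *m B.
    move=> j; apply: spB; rewrite /Qr trmxK; apply: Qinv => //.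
    by rewrite /C -tr_row /Qr in QB *; rewrite /Qr; have := QB j; rewrite /Qr.
  have [y hy'] := fin_all_exists hy.
  pose Y : 'M[K]_r := \matrix_(i, j) y j 0 i.
  have e1 : sig g *m C = C *m Y.
    apply/matrixP => i j.
    have e : (sig g *m col j C)^T 0 i = (y j *m B) 0 i by rewrite hy'.
    rewrite !mxE in e.
    have -> : (sig g *m C) i j = \sum_j0 sig g i j0 * col j C j0 0.
      by rewrite mxE; apply: eq_bigr => l _; rewrite !mxE.
    rewrite e mxE; apply: eq_bigr => l _; rewrite !mxE mulrC.
    by rewrite /C.
  exists Y; rewrite mulmxA RP // -mulmxA e1 mulmxA //.
have le := minP r0 rC iPC.
have fullB : row_full B.
  by rewrite /row_full eqn_leq rank_leq_col /=; move/eqP: fB => ->.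
move=> u.
have [x ex] : exists x, u^T = x *m B by apply/submxP; apply: submx_full.
have := lin_comb x lQr QB; rewrite /Qr -ex trmxK //.
Qed.


Lemma schur (F : 'M[K]_d) :
  (forall g, inG g -> sig g *m F = F *m sig g) -> exists c, F = c%:M.
Proof.
move=> hF.
have [c rc] : exists c, root (char_poly F^T) c.
  by apply/closed_rootP; rewrite size_char_poly; case: d d0.
have : eigenvalue F^T c by rewrite eigenvalue_root_char.
case/eigenvalueP => v hv vn.
exists c.
pose Q (u : 'cV[K]_d) := F *m u = c *: u.
have cl : clin_closed Q.
  split; first by rewrite /Q mulmx0 scaler0.
  by move=> a u w; rewrite /Q mulmxDr -scalemxAr => -> ->; rewrite scalerDr !scalerA mulrC.
have Qv : Q v^T.
  by rewrite /Q -[F]trmxK -trmx_mul hv linearZ.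
have inv : forall g u, inG g -> Q u -> Q (sig g *m u).
  move=> g u Gg; rewrite /Q => Qu.
  by rewrite mulmxA -hF // -mulmxA Qu scalemxAr.
have vn' : v^T != 0 by rewrite trmx_eq0.
have H := irred cl inv Qv vn'.
apply/matrixP => i j.
have := H (delta_mx j 0); rewrite /Q => e.
have := congr1 (fun M : 'cV_d => M i 0) e; rewrite -colE !mxE.
by move=> ->; rewrite eqxx andbT mulr_natr.
Qed.


Variables (ne : nat) (phi : 'I_ne -> 'M[K]_(m, d)).
Hypotheses (hphi : forall j g, inG g -> R g *m phi j = phi j *m sig g)
  (indep : forall c : 'I_ne -> K, \sum_j c j *: phi j = 0 -> forall j, c j = 0).

Definition Lset (S : {set 'I_ne}) (V : 'I_ne -> 'cV[K]_d) :=
  (forall l, l \notin S -> V l = 0) /\ \sum_l phi l *m V l = 0.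

Lemma Lset_ext S V V' : (forall l, V l = V' l) -> Lset S V -> Lset S V'.
Proof.
move=> ee [h1 h2]; split; first by move=> l lS; rewrite -ee h1.
have -> : \sum_l phi l *m V' l = \sum_l phi l *m V l by apply: eq_bigr => l _; rewrite ee.
exact: h2.
Qed.

Lemma Lset0 S : Lset S (fun _ => 0).
Proof. by split => // ; rewrite big1 // => l _; rewrite mulmx0. Qed.

Lemma Lset_lin S a V W : Lset S V -> Lset S W -> Lset S (fun l => a *: V l + W l).
Proof.
move=> [h1 h2] [h3 h4]; split.
  by move=> l lS; rewrite h1 // h3 // scaler0 addr0.
under eq_bigr => l _ do rewrite mulmxDr -scalemxAr.
by rewrite big_split /= -scaler_sumr h2 h4 scaler0 addr0.
Qed.

Lemma Lset_sum S (c : 'I_d -> K) (V : 'I_d -> 'I_ne -> 'cV[K]_d) :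
  (forall a, Lset S (V a)) -> Lset S (fun l => \sum_a c a *: V a l).
Proof.
move=> hV; rewrite /=.
elim: (index_enum 'I_d) => [|a s IH].
  by apply: Lset_ext (Lset0 S) => l; rewrite big_nil.
by apply: Lset_ext (Lset_lin (c a) (hV a) IH) => l; rewrite big_cons.
Qed.

Lemma Lset_sig S g V : inG g -> Lset S V -> Lset S (fun l => sig g *m V l).
Proof.
move=> Gg [h1 h2]; split; first by move=> l lS; rewrite h1 // mulmx0.
have -> : \sum_l phi l *m (sig g *m V l) = R g *m \sum_l phi l *m V l.
  rewrite mulmx_sumr; apply: eq_bigr => l _.
  by rewrite mulmxA -hphi // -mulmxA.
by rewrite h2 mulmx0.
Qed.

Lemma eval_inj_aux s : forall (S : {set 'I_ne}) (U : 'I_ne -> 'cV[K]_d),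
  (#|S| <= s)%N -> Lset S U -> forall j, U j = 0.
Proof.
elim: s => [|s IH] S U.
  rewrite leqn0 => /eqP /cards0_eq -> [h _] j; apply: h; by rewrite in_set0.
move=> hS LU j; apply/eqP; apply/negPn/negP => Uj.
have jS : j \in S.
  by apply: contraNT Uj => jS; case: LU => h _; rewrite h.
have uniq : forall V, Lset S V -> V j = 0 -> forall l, V l = 0.
  move=> V [h1 h2] Vj; apply: (IH (S :\ j)).
    by move: hS; rewrite (cardsD1 j S) jS.
  split => // l; rewrite in_setD1 negb_and negbK => /orP [/eqP -> //|]; exact: h1.
pose Q (u : 'cV[K]_d) := exists V, Lset S V /\ V j = u.
have cl : clin_closed Q.
  split; first by exists (fun _ => 0); split => //; apply: Lset0.
  move=> a u w [V [LV Vj]] [W [LW Wj]].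
  by exists (fun l => a *: V l + W l); split; [apply: Lset_lin | rewrite Vj Wj].
have inv : forall g u, inG g -> Q u -> Q (sig g *m u).
  move=> g u Gg [V [LV Vj]]; exists (fun l => sig g *m V l); split.
    exact: Lset_sig.
  by rewrite Vj.
have allQ := irred cl inv (ex_intro _ U (conj LU erefl)) Uj.
have [Va hVa] := fin_all_exists (fun a : 'I_d => allQ (delta_mx a (0 : 'I_1))).
pose Fm l : 'M[K]_d := \matrix_(b, a) Va a l b 0.
have key : forall V, Lset S V -> forall l, V l = Fm l *m V j.
  move=> V LV l.
  pose W l := V l - \sum_a V j a 0 *: Va a l.
  have LW : Lset S W.
    apply: Lset_ext (Lset_lin (-1) (Lset_sum (fun a => V j a 0) (fun a => (hVa a).1)) LV).
    by move=> l'; rewrite scaleN1r addrC.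
  have Wj : W j = 0.
    rewrite /W; apply/eqP; rewrite subr_eq0; apply/eqP.
    rewrite [LHS]matrix_sum_delta; apply: eq_bigr => a _.
    by rewrite big_ord1 (hVa a).2 (ord1 0).
  have := uniq W LW Wj l; rewrite /W => /eqP; rewrite subr_eq0 => /eqP ->.
  apply/matrixP => b c; rewrite (ord1 c) !mxE summxE; apply: eq_bigr => a _.
  by rewrite !mxE mulrC.
have comm : forall l g, inG g -> sig g *m Fm l = Fm l *m sig g.
  move=> l g Gg; apply/matrixP => b a.
  have e1 : forall M : 'M[K]_d, M b a = (M *m delta_mx a (0 : 'I_1)) b 0.
    by move=> M; rewrite -colE mxE.
  rewrite e1 [RHS]e1 -!mulmxA.
  have -> : Fm l *m delta_mx a (0 : 'I_1) = Va a l.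
    by apply/matrixP => x y; rewrite -colE !mxE (ord1 y).
  have := key _ (Lset_sig Gg (hVa a).1) l => ->.
  by rewrite (hVa a).2.
have [c hc] := fin_all_exists (fun l => schur (comm l)).
have cj : c j = 1.
  have : Fm j = 1%:M.
    apply/matrixP => b a; rewrite !mxE (hVa a).2 mxE eqxx andbT eq_sym //.
  rewrite hc => /matrixP /(_ (Ordinal d0) (Ordinal d0)); rewrite !mxE eqxx.
  by rewrite !mulr1n.
have : forall l, c l = 0.
  apply: indep; apply/matrixP => b a.
  have := (hVa a).1 => -[_ hs].
  have e2 : \sum_l phi l *m Va a l = (\sum_l c l *: phi l) *m delta_mx a (0 : 'I_1).
    rewrite mulmx_suml; apply: eq_bigr => l _.
    rewrite key; last exact: (hVa a).1.
    by rewrite (hVa a).2 hc mul_scalar_mx -scalemxAl -scalemxAr.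
  by move: hs; rewrite e2 => /matrixP /(_ b 0); rewrite -colE !mxE.
by move/(_ j); rewrite cj => /eqP; rewrite oner_eq0.
Qed.

Lemma eval_inj (U : 'I_ne -> 'cV[K]_d) :
  \sum_j phi j *m U j = 0 -> forall j, U j = 0.
Proof.
move=> h; apply: (eval_inj_aux (S := setT) (leqnn _)); split => //.
by move=> l; rewrite in_setT.
Qed.

End Invariant.


Section Reps.
Variable K : fieldType.

Lemma rep_unit n (G : 'M[K]_n -> Prop) m (rho : 'M[K]_n -> 'M[K]_m) g :
  rational_rep G rho -> G g -> rho g \in unitmx.
Proof. by case=> _ h _ _; apply: h. Qed.

Section Prod.
Variables (n1 n2 : nat) (G1 : 'M[K]_n1 -> Prop) (G2 : 'M[K]_n2 -> Prop).
Hypotheses (sG1 : subgroup_GL G1) (sG2 : subgroup_GL G2).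

Lemma G1_1 : G1 1%:M. Proof. by case: sG1. Qed.
Lemma G2_1 : G2 1%:M. Proof. by case: sG2. Qed.
Lemma G1_u A : G1 A -> A \in unitmx. Proof. by case: sG1 => h _ _ _; apply: h. Qed.
Lemma G2_u A : G2 A -> A \in unitmx. Proof. by case: sG2 => h _ _ _; apply: h. Qed.

Lemma prod_u C : prod_group G1 G2 C -> C \in unitmx.
Proof.
case=> a [b [Ga Gb ->]].
by rewrite unitmxE det_ublock unitrM -!unitmxE G1_u // G2_u.
Qed.

Definition emb1 (a : 'M[K]_n1) : 'M[K]_(n1 + n2) := block_mx a 0 0 1%:M.
Definition emb2 (b : 'M[K]_n2) : 'M[K]_(n1 + n2) := block_mx 1%:M 0 0 b.

Lemma emb1_prod a : G1 a -> prod_group G1 G2 (emb1 a).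
Proof. by move=> Ga; exists a, 1%:M; split => //; apply: G2_1. Qed.
Lemma emb2_prod b : G2 b -> prod_group G1 G2 (emb2 b).
Proof. by move=> Gb; exists 1%:M, b; split => //; apply: G1_1. Qed.

Lemma emb1M a a' : emb1 (a *m a') = emb1 a *m emb1 a'.
Proof. by rewrite /emb1 mulmx_block !mulmx0 !mul0mx !addr0 !add0r mulmx1. Qed.
Lemma emb2M b b' : emb2 (b *m b') = emb2 b *m emb2 b'.
Proof. by rewrite /emb2 mulmx_block !mulmx0 !mul0mx !addr0 !add0r mulmx1. Qed.
Lemma emb1_1 : emb1 1%:M = 1%:M. Proof. by rewrite /emb1 -scalar_mx_block. Qed.
Lemma emb2_1 : emb2 1%:M = 1%:M. Proof. by rewrite /emb2 -scalar_mx_block. Qed.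
Lemma emb12 a b : block_mx a 0 0 b = emb1 a *m emb2 b.
Proof. by rewrite /emb1 /emb2 mulmx_block !mulmx0 !mul0mx !addr0 !add0r mulmx1 mul1mx. Qed.
Lemma emb21 a b : block_mx a 0 0 b = emb2 b *m emb1 a.
Proof. by rewrite /emb1 /emb2 mulmx_block !mulmx0 !mul0mx !addr0 !add0r mulmx1 mul1mx. Qed.

Variables (m : nat) (rho : 'M[K]_(n1 + n2) -> 'M[K]_m).
Hypothesis rrho : rational_rep (prod_group G1 G2) rho.

Lemma rep1_rational : rational_rep G1 (fun a => rho (emb1 a)).
Proof.
case: rrho => hreg hu h1 hM; split.
- move=> i j.
  pose M : 'M[{mpoly K[n1 * n1]}]_(n1 + n2) := block_mx (Xmat K n1) 0 0 1%:M.
  have eM : forall a : 'M[K]_n1, map_mx (meval (coords a)) M = emb1 a.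
    move=> a; rewrite map_block_mx map_Xmat /emb1; congr block_mx; apply/matrixP => x y; rewrite !mxE ?meval0 //.
    by rewrite rmorph_nat.
  have hG : forall a, G1 a -> prod_group G1 G2 (map_mx (meval (coords a)) M).
    by move=> a Ga; rewrite eM; apply: emb1_prod.
  have hd : forall a, G1 a -> \det a = \det (map_mx (meval (coords a)) M) * peval 1 a.
    by move=> a _; rewrite eM /emb1 det_ublock det1 /peval meval1 !mulr1.
  have H := reg_pull (G' := G1) (G := prod_group G1 G2) (M := M) (r := 1)
    (f := fun C => rho C i j) G1_u hG hd (hreg i j).
  by apply: reg_ext H => a _; rewrite eM.
- by move=> a Ga; apply: hu; apply: emb1_prod.
- by rewrite emb1_1.
- by move=> a a' Ga Ga'; rewrite emb1M hM //; apply: emb1_prod.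
Qed.

Lemma rep2_rational : rational_rep G2 (fun a => rho (emb2 a)).
Proof.
case: rrho => hreg hu h1 hM; split.
- move=> i j.
  pose M : 'M[{mpoly K[n2 * n2]}]_(n1 + n2) := block_mx 1%:M 0 0 (Xmat K n2).
  have eM : forall a : 'M[K]_n2, map_mx (meval (coords a)) M = emb2 a.
    move=> a; rewrite map_block_mx map_Xmat /emb2; congr block_mx; apply/matrixP => x y; rewrite !mxE ?meval0 //.
    by rewrite rmorph_nat.
  have hG : forall a, G2 a -> prod_group G1 G2 (map_mx (meval (coords a)) M).
    by move=> a Ga; rewrite eM; apply: emb2_prod.
  have hd : forall a, G2 a -> \det a = \det (map_mx (meval (coords a)) M) * peval 1 a.
    by move=> a _; rewrite eM /emb2 det_ublock det1 /peval meval1 mul1r mulr1.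
  have H := reg_pull (G' := G2) (G := prod_group G1 G2) (M := M) (r := 1)
    (f := fun C => rho C i j) G2_u hG hd (hreg i j).
  by apply: reg_ext H => a _; rewrite eM.
- by move=> a Ga; apply: hu; apply: emb2_prod.
- by rewrite emb2_1.
- by move=> a a' Ga Ga'; rewrite emb2M hM //; apply: emb2_prod.
Qed.


Lemma rho_block a b : G1 a -> G2 b ->
  rho (block_mx a 0 0 b) = rho (emb1 a) *m rho (emb2 b) /\
  rho (block_mx a 0 0 b) = rho (emb2 b) *m rho (emb1 a).
Proof.
case: rrho => _ _ _ hM Ga Gb; split.
  by rewrite emb12 hM //; [apply: emb1_prod | apply: emb2_prod].
by rewrite emb21 hM //; [apply: emb2_prod | apply: emb1_prod].
Qed.


Lemma proj1_rational m' (rho1 : 'M[K]_n1 -> 'M[K]_m') :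
  rational_rep G1 rho1 -> rational_rep (prod_group G1 G2) (fun C => rho1 (ulsubmx C)).
Proof.
case=> hreg hu h1 hM; split.
- move=> i j.
  pose M : 'M[{mpoly K[(n1 + n2) * (n1 + n2)]}]_n1 := ulsubmx (Xmat K (n1 + n2)).
  pose M2 : 'M[{mpoly K[(n1 + n2) * (n1 + n2)]}]_n2 := drsubmx (Xmat K (n1 + n2)).
  have eM : forall C, map_mx (meval (coords C)) M = ulsubmx C.
    by move=> C; rewrite map_ulsubmx map_Xmat.
  have eM2 : forall C, map_mx (meval (coords C)) M2 = drsubmx C.
    by move=> C; rewrite map_drsubmx map_Xmat.
  have [q hq] := peval_map M2 (Pdet K n2).
  have hG : forall C, prod_group G1 G2 C -> G1 (map_mx (meval (coords C)) M).
    by move=> C [a [b [Ga Gb ->]]]; rewrite eM block_mxKul.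
  have hd : forall C, prod_group G1 G2 C ->
      \det C = \det (map_mx (meval (coords C)) M) * peval q C.
    move=> C [a [b [Ga Gb ->]]]; rewrite eM -hq eM2 peval_Pdet.
    by rewrite block_mxKul block_mxKdr det_ublock.
  have H := reg_pull (G' := prod_group G1 G2) (G := G1) (M := M) (r := q)
    (f := fun a => rho1 a i j) prod_u hG hd (hreg i j).
  by apply: reg_ext H => C _; rewrite eM.
- by move=> C [a [b [Ga Gb ->]]]; rewrite block_mxKul; apply: hu.
- by rewrite (scalar_mx_block n1 n2) block_mxKul.
- move=> C C' [a [b [Ga Gb ->]]] [a' [b' [Ga' Gb' ->]]].
  rewrite mulmx_block !block_mxKul ?mulmx0 ?mul0mx ?addr0 hM //.
Qed.

Lemma proj2_rational m' (rho2 : 'M[K]_n2 -> 'M[K]_m') :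
  rational_rep G2 rho2 -> rational_rep (prod_group G1 G2) (fun C => rho2 (drsubmx C)).
Proof.
case=> hreg hu h1 hM; split.
- move=> i j.
  pose M : 'M[{mpoly K[(n1 + n2) * (n1 + n2)]}]_n2 := drsubmx (Xmat K (n1 + n2)).
  pose M2 : 'M[{mpoly K[(n1 + n2) * (n1 + n2)]}]_n1 := ulsubmx (Xmat K (n1 + n2)).
  have eM : forall C, map_mx (meval (coords C)) M = drsubmx C.
    by move=> C; rewrite map_drsubmx map_Xmat.
  have eM2 : forall C, map_mx (meval (coords C)) M2 = ulsubmx C.
    by move=> C; rewrite map_ulsubmx map_Xmat.
  have [q hq] := peval_map M2 (Pdet K n1).
  have hG : forall C, prod_group G1 G2 C -> G2 (map_mx (meval (coords C)) M).
    by move=> C [a [b [Ga Gb ->]]]; rewrite eM block_mxKdr.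
  have hd : forall C, prod_group G1 G2 C ->
      \det C = \det (map_mx (meval (coords C)) M) * peval q C.
    move=> C [a [b [Ga Gb ->]]]; rewrite eM -hq eM2 peval_Pdet.
    by rewrite block_mxKul block_mxKdr det_ublock mulrC.
  have H := reg_pull (G' := prod_group G1 G2) (G := G2) (M := M) (r := q)
    (f := fun a => rho2 a i j) prod_u hG hd (hreg i j).
  by apply: reg_ext H => C _; rewrite eM.
- by move=> C [a [b [Ga Gb ->]]]; rewrite block_mxKdr; apply: hu.
- by rewrite (scalar_mx_block n1 n2) block_mxKdr.
- move=> C C' [a [b [Ga Gb ->]]] [a' [b' [Ga' Gb' ->]]].
  rewrite mulmx_block !block_mxKdr ?mulmx0 ?mul0mx ?add0r hM //.
Qed.

End Prod.
End Reps.

Section Hard.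
Variable K : closedFieldType.

Lemma sig_rational n (G : 'M[K]_n -> Prop) m (R : 'M[K]_n -> 'M[K]_m) d
  (P : 'M[K]_(m, d)) L :
  subgroup_GL G -> rational_rep G R -> inv_sub G R P -> L *m P = 1%:M ->
  rational_rep G (sig R P L).
Proof.
case=> Gu G1 GM GV [reg Ru R1 RM] iP hL.
have hom : forall g h, G g -> G h -> sig R P L (g *m h) = sig R P L g *m sig R P L h.
  move=> g h Gg Gh.
  have e := RP iP hL Gh.
  by rewrite sigE in e; rewrite !sigE RM // !mulmxA -(mulmxA _ (R h)) e !mulmxA.
have one : sig R P L 1%:M = 1%:M by rewrite sigE R1 mulmx1 hL.
split => //; last first.
  move=> g Gg.
  have : sig R P L g *m sig R P L (invmx g) = 1%:M.
    by rewrite -hom ?mulmxV ?Gu //; apply: GV.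
  by case/mulmx1_unit.

- move=> i j.
  have := @regmx_mul _ _ G Gu _ _ _ (fun g => L *m R g) (fun _ => P) _ (regmx_const _ _) i j.
  have h1 := @regmx_mul _ _ G Gu _ _ _ (fun _ => L) R (regmx_const _ _) reg.
  move=> /(_ h1); apply: reg_ext => g _; by rewrite sigE.
Qed.


Section Sig2.
Variables (n2 : nat) (G2 : 'M[K]_n2 -> Prop) (m d ne : nat)
  (R2 : 'M[K]_n2 -> 'M[K]_m) (Bh : 'M[K]_(ne, m * d)).
Hypotheses (sG2 : subgroup_GL G2) (rR2 : rational_rep G2 R2) (fBh : row_free Bh).

Definition phi2 (j : 'I_ne) : 'M[K]_(m, d) := vec_mx (row j Bh).

Hypothesis stab : forall b j, G2 b -> (mxvec (R2 b *m phi2 j) <= Bh)%MS.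

Definition X2 b : 'M[K]_(ne, m * d) := \matrix_(j, c) mxvec (R2 b *m phi2 j) 0 c.
Definition sig2 b : 'M[K]_ne := (X2 b *m pinvmx Bh)^T.

Lemma mxvec_comb (c : 'I_ne -> K) :
  mxvec (\sum_l c l *: phi2 l) = (\row_l c l) *m Bh.
Proof.
rewrite linear_sum mulmx_sum_row; apply: eq_bigr => l _.
by rewrite linearZ /= vec_mxK mxE.
Qed.

Lemma indep2 (c : 'I_ne -> K) : \sum_l c l *: phi2 l = 0 -> forall l, c l = 0.
Proof.
move=> h l.
have : (\row_l c l) *m Bh = 0 *m Bh by rewrite -mxvec_comb h mul0mx linear0.
move/(row_free_inj fBh)/rowP/(_ l); by rewrite !mxE.
Qed.

Lemma uniq2 (c c' : 'I_ne -> K) :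
  \sum_l c l *: phi2 l = \sum_l c' l *: phi2 l -> forall l, c l = c' l.
Proof.
move=> h l; apply/eqP; rewrite -subr_eq0; apply/eqP.
apply: (indep2 (c := fun l => c l - c' l)).
under eq_bigr => i _ do rewrite scalerBl.
by rewrite sumrB h subrr.
Qed.

Lemma expand2 b j : G2 b -> R2 b *m phi2 j = \sum_l sig2 b l j *: phi2 l.
Proof.
move=> Gb; apply: (can_inj mxvecK).
rewrite mxvec_comb.
have sX : (X2 b <= Bh)%MS.
  apply/row_subP => i.
  have -> : row i (X2 b) = mxvec (R2 b *m phi2 i) by apply/rowP => c; rewrite !mxE.
  exact: stab.
have -> : \row_l sig2 b l j = row j (X2 b *m pinvmx Bh).
  by apply/rowP => l; rewrite !mxE.
by rewrite -row_mul mulmxKpV //; apply/rowP => c; rewrite !mxE.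
Qed.

Lemma sig2_rational : rational_rep G2 sig2.
Proof.
case: sG2 => Gu G1 GM GV; case: rR2 => reg Ru R1 RM.
have one : sig2 1%:M = 1%:M.
  apply/matrixP => l j.
  have e : \sum_l sig2 1%:M l j *: phi2 l = \sum_l (l == j)%:R *: phi2 l.
    rewrite -expand2 // R1 mul1mx (bigD1 j) //= eqxx scale1r big1 ?addr0 //.
    by move=> i /negPf ->; rewrite scale0r.
  by rewrite (uniq2 e) mxE.
have hom : forall b b', G2 b -> G2 b' -> sig2 (b *m b') = sig2 b *m sig2 b'.
  move=> b b' Gb Gb'; apply/matrixP => p j.
  suff e : \sum_l sig2 (b *m b') l j *: phi2 l = \sum_l (sig2 b *m sig2 b') l j *: phi2 l.
    by rewrite (uniq2 e).
  rewrite -expand2; last exact: GM.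
  rewrite RM // -mulmxA expand2 // mulmx_sumr.
  under eq_bigr => l _ do rewrite -scalemxAr expand2 // scaler_sumr.
  rewrite exchange_big /=; apply: eq_bigr => q _.
  rewrite mxE scaler_suml; apply: eq_bigr => l _.
  by rewrite scalerA mulrC.
split => //; last first.
- move=> b Gb.
  have : sig2 b *m sig2 (invmx b) = 1%:M.
    by rewrite -hom ?mulmxV ?Gu //; apply: GV.
  by case/mulmx1_unit.
- move=> l j.
  have rX : regmx G2 X2.
    move=> j' c; case/mxvec_indexP: c => i a.
    have := @regmx_mul _ _ G2 Gu _ _ _ R2 (fun _ => phi2 j') reg (regmx_const _ _) i a.
    by apply: reg_ext => b _; rewrite [in RHS]mxE mxvecE.
  have := regmx_tr (@regmx_mul _ _ G2 Gu _ _ _ X2 (fun _ => pinvmx Bh) rX (regmx_const _ _)) l j.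
  by apply: reg_ext.
Qed.

End Sig2.
End Hard.

Lemma hard (K : closedFieldType) n1 n2 (G1 : 'M[K]_n1 -> Prop) (G2 : 'M[K]_n2 -> Prop)
  (sG1 : subgroup_GL G1) (sG2 : subgroup_GL G2) m (rho : 'M[K]_(n1 + n2) -> 'M[K]_m) k :
  rational_rep (prod_group G1 G2) rho -> (0 < m)%N -> inM G1 k -> inM G2 k ->
  has_nonzero_invariant (prod_group G1 G2) rho k.
Proof.
move=> rr m0 [k0 iM1] [_ iM2].
pose R1 := fun a => rho (emb1 n2 a).
pose R2 := fun b => rho (emb2 n1 b).
have rR1 : rational_rep G1 R1 := rep1_rational sG1 sG2 rr.
have rR2 : rational_rep G2 R2 := rep2_rational sG1 sG2 rr.
have comm : forall a b, G1 a -> G2 b -> R1 a *m R2 b = R2 b *m R1 a.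
  by move=> a b Ga Gb; have [<- <-] := rho_block sG1 sG2 rr Ga Gb.
have [d [P [d0 rP iP minP]]] := min_inv_exists G1 R1 m0.
have [L hL] := P_left_inv rP.
pose s1 := sig R1 P L.
have rs1 : rational_rep G1 s1 := sig_rational sG1 rR1 iP hL.
have [T1 [T1n T1i]] := iM1 d s1 d0 rs1.
pose Hq (v : 'rV[K]_(m * d)) := forall a, G1 a -> R1 a *m vec_mx v = vec_mx v *m s1 a.
have lH : lin_closed Hq.
  split; first by move=> a _; rewrite linear0 mulmx0 mul0mx.
  move=> c u v hu hv a Ga; rewrite linearD linearZ /= mulmxDr mulmxDl.
  by rewrite -scalemxAr -scalemxAl hu // hv.
have [ne [Bh [fBh QB spB]]] := basis_exists lH.
pose phi := phi2 Bh.
have hphi : forall j a, G1 a -> R1 a *m phi j = phi j *m s1 a.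
  by move=> j a Ga; apply: QB.
have stab : forall b j, G2 b -> (mxvec (R2 b *m phi j) <= Bh)%MS.
  move=> b j Gb; apply/submxP; apply: spB => a Ga.
  by rewrite mxvecK mulmxA comm // -mulmxA hphi // mulmxA.
have rs2 := sig2_rational sG2 rR2 fBh stab.
have ne0 : (0 < ne)%N.
  have HP : Hq (mxvec P) by move=> a Ga; rewrite mxvecK (RP iP hL Ga).
  have [x ex] := spB _ HP.
  case: ne Bh fBh QB spB phi hphi stab rs2 x ex => // Bh _ _ _ _ _ _ _ x ex.
  move: rP; rewrite -(mxvecK P) ex (thinmx0 x) mul0mx linear0 mxrank0 => d00.
  by move: d0; rewrite -d00.
have [T2 [T2n T2i]] := iM2 ne (sig2 R2 Bh) ne0 rs2.
pose N := fun (i : 'I_m) (p : 'I_d * 'I_ne) => phi p.2 i p.1.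
have indep : forall c : 'I_ne -> K, \sum_j c j *: phi j = 0 -> forall j, c j = 0.
  by move=> c h j; apply: (indep2 fBh h).
have inj : forall x : 'I_d * 'I_ne -> K,
    (forall i, \sum_p N i p * x p = 0) -> forall p, x p = 0.
  move=> x hx [a j].
  pose U (j : 'I_ne) : 'cV[K]_d := \col_a x (a, j).
  have hU : \sum_j phi j *m U j = 0.
    apply/matrixP => i c; rewrite [RHS]mxE -(hx i) summxE.
    rewrite [RHS](eq_bigr (fun p => (fun a j => N i (a, j) * x (a, j)) p.1 p.2)); last by case.
    rewrite -(pair_bigA _ (fun a j => N i (a, j) * x (a, j))) /= exchange_big /=.
    apply: eq_bigr => j' _.
    by rewrite mxE; apply: eq_bigr => a' _; rewrite /N /phi /phi2 !mxE.
  have := eval_inj d0 rP iP minP hL hphi indep hU j.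
  by move/matrixP/(_ a 0); rewrite !mxE.
have [Li hLi] := left_inv inj.
exists (tact N (tpair T1 T2)); split.
  apply/eqP => /(tact_inj hLi) /eqP; apply/negP; exact: tpair_neq0.
move=> C [a [b [Ga Gb ->]]].
have [eC _] := rho_block sG1 sG2 rr Ga Gb.
rewrite tensor_actE eC tact_comp.
rewrite (@tact_ext _ _ _ _ _ (fun i p => \sum_q N i q * (s1 a q.1 p.1 * sig2 R2 Bh b q.2 p.2))).
  by rewrite -tact_comp tact_pair -!tensor_actE T1i // T2i.
move=> i [c j] /=.
have -> : \sum_l (R1 a *m R2 b) i l * N l (c, j) = ((R1 a *m R2 b) *m phi j) i c.
  by rewrite mxE.
rewrite -mulmxA (expand2 stab j Gb) mulmx_sumr summxE.
rewrite (eq_bigr (fun q => (fun q1 q2 => N i (q1, q2) * (s1 a q1 c * sig2 R2 Bh b q2 j)) q.1 q.2)); last by case.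
rewrite -(pair_bigA _ (fun q1 q2 => N i (q1, q2) * (s1 a q1 c * sig2 R2 Bh b q2 j))) /= exchange_big /=.
apply: eq_bigr => l _.
rewrite -scalemxAr hphi // [LHS]mxE [X in _ * X]mxE big_distrr /=.
by apply: eq_bigr => q _; rewrite /N /=; ring.
Qed.


Unset Implicit Arguments.

Theorem proposition3 (K : closedFieldType) (hchar : [pchar K] =i pred0)
  (n1 n2 : nat) (G1 : 'M[K]_n1 -> Prop) (G2 : 'M[K]_n2 -> Prop) :
  connected_group G1 -> reductive_group G1 ->
  connected_group G2 -> reductive_group G2 ->
  forall k : nat,
    inM (prod_group G1 G2) k <-> (inM G1 k /\ inM G2 k).
Proof.
move=> [[sG1 _] _] _ [[sG2 _] _] _ k; split.
- move=> [k0 h]; split; split => // m' rho1 m0 rr1.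
    have [T [Tn Ti]] := h m' _ m0 (proj1_rational sG1 sG2 rr1).
    exists T; split => // a Ga.
    by have := Ti _ (emb1_prod sG2 Ga); rewrite /emb1 block_mxKul.
  have [T [Tn Ti]] := h m' _ m0 (proj2_rational sG1 sG2 rr1).
  exists T; split => // b Gb.
  by have := Ti _ (emb2_prod sG1 Gb); rewrite /emb2 block_mxKdr.
- move=> [h1 h2]; split; first by case: h1.
  by move=> m rho m0 rr; apply: hard.
Qed.
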